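(* Let $\Gamma$ be a finite set with $|\Gamma|\geq 2$, let $r\geq 2$, and let $W=\mathrm{Sym}(\Gamma)\wr S_r$ act on $\Omega=\Gamma^r$ in product action. If $H$ is a transitive nonabelian characteristically simple subgroup of $W$, then $H$ is contained in the base group, that is, $H\leq \mathrm{Sym}(\Gamma)^r$.
   Context: A finite group is characteristically simple if its only $\mathrm{Aut}$-invariant subgroups are $1$ and itself; equivalently it is a direct product of pairwise isomorphic simple groups. In the product action of $W=\mathrm{Sym}(\Gamma)\wr S_r$ on $\Gamma^r$, an element $(a_1,\ldots,a_r)b$ with $a_i\in\mathrm{Sym}(\Gamma)$ and $b\in S_r$ maps $(\gamma_1,\ldots,\gamma_r)$ to $(\gamma_{1b^{-1}}a_{1b^{-1}},\ldots,\gamma_{rb^{-1}}a_{rb^{-1}})$; the base group is $\mathrm{Sym}(\Gamma)^r$, the kernel of the natural projection $W\to S_r$. *)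

(* Defs.v *)
From mathcomp Require Import all_boot all_order all_fingroup all_solvable.
Set Implicit Arguments. Unset Strict Implicit. Unset Printing Implicit Defensive.
Local Open Scope group_scope.

Notation prod_omega Gamma r := {ffun 'I_r -> Gamma} (only parsing).

(* Image of gamma under (a_1,...,a_r) b in product action:
   i-th coordinate is gamma_{i b^-1} a_{i b^-1}. *)
Definition wr_act (Gamma : finType) (r : nat)
  (a : {ffun 'I_r -> {perm Gamma}}) (b : {perm 'I_r})
  (gamma : prod_omega Gamma r) : prod_omega Gamma r :=
  [ffun i => a (b^-1 i) (gamma (b^-1 i))].

Definition wreathW (Gamma : finType) (r : nat) : {set {perm prod_omega Gamma r}} :=
  [set g : {perm prod_omega Gamma r} | [exists a : {ffun 'I_r -> {perm Gamma}}, exists b : {perm 'I_r},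
             [forall gamma, g gamma == wr_act a b gamma]]].

Definition base_group (Gamma : finType) (r : nat) : {set {perm prod_omega Gamma r}} :=
  [set g : {perm prod_omega Gamma r} | [exists a : {ffun 'I_r -> {perm Gamma}},
             [forall gamma, g gamma == wr_act a 1 gamma]]].

(* Main.v *)
Require Import Defs.
From mathcomp Require Import all_boot all_order all_fingroup all_solvable.
From mathcomp Require Import zify.
Set Implicit Arguments. Unset Strict Implicit. Unset Printing Implicit Defensive.

Module Aux.

Lemma legendre_aux p l m : 1 < p ->
  p.-1 * (\sum_(1 <= k < m.+1) l %/ p ^ k) + l %/ p ^ m <= l.
Proof.
move=> p1; elim: m => [|m IH]; first by rewrite big_geq // muln0 expn0 divn1.
rewrite big_nat_recr //= mulnDr -addnA.
have H1 : p.-1 * (l %/ p ^ m.+1) + l %/ p ^ m.+1 = p * (l %/ p ^ m.+1).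
  by rewrite -{2}(mul1n (l %/ _)) -mulnDl addn1 prednK // ltnW.
rewrite H1; apply: leq_trans IH; rewrite leq_add2l.
by rewrite expnSr divnMA mulnC leq_divM.
Qed.

Lemma legendre p l : prime p -> 0 < l -> p.-1 * logn p l`! < l.
Proof.
move=> pp l0; have p1 := prime_gt1 pp.
set m := trunc_log p l.
have hm : p ^ m <= l by apply: trunc_logP.
have hm2 : l < p ^ m.+1 by apply: trunc_log_ltn.
have ml : m < l by apply: leq_trans (ltn_expl _ p1) hm.
rewrite logn_fact // (big_cat_nat _ (n := m.+1)) //=; last by rewrite ltnS ltnW.
have Z : \sum_(m.+1 <= k < l.+1) l %/ p ^ k = 0.
  rewrite big_nat big1 // => k /andP[km _]; apply: divn_small.
  by apply: leq_trans hm2 _; rewrite leq_exp2l.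
rewrite Z addn0.
have := legendre_aux l m p1.
have : 0 < l %/ p ^ m by rewrite divn_gt0 ?expn_gt0 ?(ltnW p1).
lia.
Qed.

Lemma arith n l s m : 1 < n -> 1 < l -> 0 < s -> s <= n -> m %| l`! ->
  n ^ l %| m * s -> s = n /\ n = 2.
Proof.
move=> n1 l1 s0 sn ml dv.
have dv2 : n ^ l %| l`! * s := dvdn_trans dv (dvdn_mul ml (dvdnn s)).
have key p : prime p -> l * logn p n <= logn p s + logn p l`!.
  move=> pp; rewrite -lognX addnC -lognM ?fact_gt0 //.
  by apply: dvdn_leq_log; rewrite ?muln_gt0 ?fact_gt0.
have leg p : prime p -> p.-1 * logn p l`! <= l.-1.
  by move=> pp; have := legendre pp (ltnW l1); lia.
have ns : n %| s.
  apply/dvdn_partP => [|p]; first lia.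
  rewrite mem_primes => /and3P[pp _ _]; rewrite p_part pfactor_dvdn //.
  have := key p pp; have := leg p pp; have := prime_gt1 pp.
  move: (logn p n) (logn p s) (logn p l`!) => e f v.
  nia.
have sn' : s = n by apply/eqP; rewrite eqn_leq sn dvdn_leq.
split => //; subst s.
have eq1 p : prime p -> p %| n -> p = 2 /\ logn p n = 1.
  move=> pp pn.
  have e1 : 0 < logn p n by rewrite logn_gt0 mem_primes pp pn; lia.
  have := key p pp; have := leg p pp; have := prime_gt1 pp.
  move: (logn p n) (logn p l`!) e1 => e v e1.
  nia.
have [q0 q0p q0n] := pdivP n1.
have [q02 e2] := eq1 q0 q0p q0n; subst q0.
have d2 : 2 %| n by rewrite -[2]expn1 pfactor_dvdn //; lia.
have [k hk] := dvdnP d2.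
case: (ltngtP k 1) => [|k1|k1]; [lia| |lia].
have [q qp qk] := pdivP k1.
have qn : q %| n by rewrite hk dvdn_mulr.
have [q2 _] := eq1 q qp qn.
subst q.
have : 2 ^ 2 %| n by rewrite hk -[2 ^ 2]/(2 * 2) dvdn_mul.
rewrite pfactor_dvdn // ?e2 //; lia.
Qed.

Local Open Scope group_scope.

Section CS.
Variable gT : finGroupType.
Implicit Types G M X : {group gT}.

Lemma cs_perfect G : charsimple G -> ~~ abelian G -> G^`(1) = G.
Proof.
case/charsimpleP=> _ simG nabG; apply: simG; last exact: der_char.
by apply: contra nabG => /eqP/derG1P.
Qed.

Lemma cs_complement G M : charsimple G -> M <| G -> exists X : {group gT}, M \x X = G.
Proof.
case/charsimpleP=> ntG simG nsMG.
have [S0 minS0 sS0G]: {S0 : {group gT} | minnormal S0 G & S0 \subset G}.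
  by apply: mingroup_exists; rewrite ntG normG.
case/mingroupP: minS0 => /andP[ntS0 nS0G] minS0.
have defG: <<\bigcup_(f in Aut G) f @: S0>> = G.
  have sXG: \bigcup_(f in Aut G) f @: S0 \subset G.
    by apply/bigcupsP=> f Af; rewrite -(im_autm Af) morphimEdom imsetS.
  apply: simG.
    apply: contra ntS0; rewrite -!subG1; apply: subset_trans.
    rewrite sub_gen // (bigcup_max 1) ?group1 //.
    apply/subsetP=> x S0x; apply/imsetP; exists x => //; by rewrite perm1.
  rewrite /characteristic gen_subG sXG; apply/forall_inP=> f Af.
  rewrite -(autmE Af) -morphimEsub ?gen_subG ?morphim_gen // genS //.
  rewrite morphimEsub //= autmE.
  apply/subsetP=> _ /imsetP[_ /bigcupP[g Ag /imsetP[x Hx ->]] ->].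
  apply/bigcupP; exists (g * f); first exact: groupM.
  by apply/imsetP; exists x; rewrite // permM.
pose P := fun X : {group gT} => (X <| G) && (M :&: X == 1).
have [X maxX _] : {X : {group gT} | maxgroup X P & [1 gT] \subset X}.
  by apply: maxgroup_exists; rewrite /P normal1 setIg1 eqxx.
case/maxgroupP: maxX => /andP[nsXG /eqP tiMX] maxX.
have [sMG nMG] := andP nsMG; have [sXG nXG] := andP nsXG.
have nsYG : M <*> X <| G by rewrite /normal join_subG sMG sXG normsY.
have sYG := normal_sub nsYG.
have cMX : X \subset 'C(M).
  rewrite centsC (sameP commG1P trivgP) -tiMX subsetI commg_subl commg_subr.
  by rewrite (subset_trans sMG) // (subset_trans sXG).
have defMX : M * X = M <*> X by rewrite cent_joinEr.
suff eqY : M <*> X = G by exists X; rewrite dprodE // defMX.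
apply/eqP; rewrite eqEsubset sYG /=; apply/negPn/negP => nsGY.
have [f Af sfS0Y]: exists2 f, f \in Aut G & ~~ (f @: S0 \subset M <*> X).
  move: nsGY; rewrite -{1}defG gen_subG; case/subsetPn=> x.
  by case/bigcupP=> f Af fHx Mx; exists f => //; apply/subsetPn; exists x.
have sfHG: autm Af @* S0 \subset G by rewrite -{4}(im_autm Af) morphimS.
have /mingroupP[/andP[ntfH nfHG] minfH]: minnormal (autm Af @* S0) G.
  apply/mingroupP; rewrite andbC -{1}(im_autm Af) morphim_norms //=.
  rewrite -subG1 sub_morphim_pre // -kerE ker_autm subG1.
  split=> // N /andP[ntN nNG] sNfH.
  have sNG: N \subset G := subset_trans sNfH sfHG.
  apply/eqP; rewrite eqEsubset sNfH sub_morphim_pre //=.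
  rewrite -(morphim_invmE (injm_autm Af)) [_ @* N]minS0 //=.
    rewrite -subG1 sub_morphim_pre /= ?im_autm // morphpre_invm morphim1 subG1.
    by rewrite ntN -{1}(im_invm (injm_autm Af)) /= {2}im_autm morphim_norms.
  by rewrite sub_morphim_pre /= ?im_autm // morphpre_invm.
have tiSY: autm Af @* S0 :&: (M <*> X) = 1.
  apply/eqP/idPn=> ntMfH; case/setIidPl: sfS0Y.
  rewrite -(autmE Af) -morphimEsub //.
  by apply: minfH; rewrite ?subsetIl // ntMfH normsI // normal_norm.
set S := autm Af @* S0 in ntfH nfHG tiSY sfHG.
have PZ : P (X <*> S)%G.
  rewrite /P /normal join_subG sXG sfHG normsY //=.
  apply/eqP/trivgP/subsetP => m /setIP[Mm].
  rewrite /= norm_joinEr ?(subset_trans sfHG) //.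
  case/imset2P=> x s Xx Ss defm.
  have Ys : s \in M <*> X.
    have -> : s = x^-1 * m by rewrite defm mulKg.
    by rewrite groupM ?groupV // mem_gen // inE ?Xx ?Mm ?orbT.
  have : s \in S :&: (M <*> X) by rewrite inE Ss Ys.
  rewrite tiSY => /set1P s1.
  have : m \in M :&: X by rewrite inE Mm defm s1 mulg1 Xx.
  by rewrite tiMX.
have eqZ := maxX _ PZ (joing_subl X S).
case/negP: ntfH; rewrite -subG1 -tiSY subsetI subxx /=.
apply: subset_trans (joing_subr X S) _; rewrite eqZ.
exact: joing_subr.
Qed.
End CS.

Section Wr.
Variables (T : finType) (r : nat).
Local Notation Om := {ffun 'I_r -> T}.
Local Notation W := (wreathW T r).

Definition top (g : {perm Om}) : {perm 'I_r} :=
  odflt 1 [pick b | [exists a : {ffun 'I_r -> {perm T}}, [forall z, g z == wr_act a b z]]].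

Lemma topP g : g \in W -> exists a, forall z, g z = wr_act a (top g) z.
Proof.
rewrite inE => /existsP[a /existsP[b /forallP Hb]].
rewrite /top; case: pickP => [b' /= /existsP[a' /forallP Hb']|nob].
  by exists a' => z; apply/eqP.
have := nob b; rewrite /= (introT existsP) //; exists a; exact/forallP.
Qed.

Lemma coordW g : g \in W ->
  exists a : {ffun 'I_r -> {perm T}}, forall z i, g z (top g i) = a i (z i).
Proof.
case/topP => a Ha; exists a => z i; by rewrite Ha /wr_act ffunE permK.
Qed.

Lemma coord_loc g (w w' : Om) i : g \in W -> w i = w' i -> g w (top g i) = g w' (top g i).
Proof. by case/coordW=> a Ha e; rewrite !Ha e. Qed.

Lemma coord_inj g (w w' : Om) i : g \in W -> g w (top g i) = g w' (top g i) -> w i = w' i.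
Proof. by case/coordW=> a Ha; rewrite !Ha; apply: perm_inj. Qed.

Hypothesis nT : 1 < #|T|.



Lemma top_uniq g (b : {perm 'I_r}) (a : {ffun 'I_r -> {perm T}}) : g \in W ->
  (forall z i, g z (b i) = a i (z i)) -> top g = b.
Proof.
move=> gW Hb; apply/permP => i.
have [a' Ha'] := coordW gW.
set j := b i; set i' := (top g)^-1 j.
have ei' : top g i' = j by rewrite permKV.
apply/eqP/negPn/negP => ne.
have nii' : i != i'.
  apply/eqP => eii'; move/negP: ne; apply.
  by rewrite {1}eii' ei' /j.
have [t1 [t2 nt]] : exists t1 t2 : T, t1 != t2.
  have /card_gt0P [t1 _] : 0 < #|T| by apply: ltnW.
  have : 0 < #|[predD1 T & t1]|.
    by move: nT; rewrite (cardD1 t1).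
  case/card_gt0P => t2; rewrite inE andbT => ne21.
  by exists t1, t2; rewrite eq_sym.
pose z : Om := [ffun _ : 'I_r => t1].
pose z' : Om := [ffun k : 'I_r => if k == i then t2 else t1].
have e1 : g z j = g z' j.
  by rewrite -ei' !Ha' !ffunE eq_sym (negPf nii').
move: e1; rewrite /j !Hb !ffunE eqxx => /perm_inj/eqP; by rewrite (negPf nt).
Qed.

End Wr.
Arguments top {T r} g.

Section Main.
Variables (T : finType) (r : nat).
Local Notation Om := {ffun 'I_r -> T}.
Local Notation W := (wreathW T r).
Variable H : {group {perm Om}}.
Hypotheses (nT : 1 < #|T|) (sHW : H \subset W).

Lemma topM g h : g \in W -> h \in W -> g * h \in W -> top (g * h) = top g * top h.
Proof.
move=> gW hW ghW; have [a Ha] := coordW gW; have [a' Ha'] := coordW hW.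
apply: (top_uniq nT (a := [ffun i => a i * a' (top g i)])) => // z i.
by rewrite !permM ffunE permM Ha' Ha.
Qed.

Lemma topHM : {in H &, {morph top : x y / x * y}}.
Proof.
move=> g h gH hH; apply: topM; apply: (subsetP sHW) => //; exact: groupM.
Qed.

Definition topm : {morphism H >-> {perm 'I_r}} := Morphism topHM.

Lemma topH1 : top (1 : {perm Om}) = 1.
Proof. exact: (morph1 topm). Qed.

Lemma topHV h : h \in H -> top h^-1 = (top h)^-1.
Proof. exact: (morphV topm). Qed.

Lemma topHM' g h : g \in H -> h \in H -> top (g * h) = top g * top h.
Proof. exact: topHM. Qed.

Variables (i0 : 'I_r).

Definition Dl : {set 'I_r} := [set top h i0 | h in H].

Lemma Dl_i0 : i0 \in Dl.
Proof. by apply/imsetP; exists 1; rewrite ?group1 // topH1 perm1. Qed.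

Lemma Dl_st h j : h \in H -> j \in Dl -> top h j \in Dl.
Proof.
move=> hH /imsetP[g gH ->]; apply/imsetP; exists (g * h); first exact: groupM.
by rewrite topHM' // permM.
Qed.

Lemma Dl_N h : h \in H -> top h \in 'N(Dl | 'P).
Proof.
move=> hH; apply/astabsP => j /=; rewrite apermE; apply/idP/idP; last exact: Dl_st.
by move=> /(Dl_st (groupVr hH)); rewrite topHV // -permM mulgV perm1.
Qed.

Definition tD (h : {perm Om}) := restr_perm Dl (top h).

Lemma tDM : {in H &, {morph tD : x y / x * y}}.
Proof.
move=> g h gH hH; rewrite /tD topHM' //.
exact: (morphM (restr_perm_morphism Dl) (Dl_N gH) (Dl_N hH)).
Qed.

Definition tDm : {morphism H >-> {perm 'I_r}} := Morphism tDM.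

Definition L := [group of 'ker tDm].

Lemma L_sub : L \subset H.
Proof. by apply/subsetP => g; apply: dom_ker. Qed.

Lemma L_fix l j : l \in L -> j \in Dl -> top l j = j.
Proof.
move=> lL jD; have lH := subsetP L_sub l lL.
have := mker lL; rewrite /= /tD => e.
by rewrite -(restr_permE (Dl_N lH) jD) e perm1.
Qed.

Lemma index_L : #|H : L| %| #|Dl|`!.
Proof.
have := card_morphim tDm H; rewrite setIid => <-.
rewrite -(perm.card_Sym Dl); apply: (cardSg (G := perm.Sym_group Dl)).
apply/subsetP => _ /morphimP[h hH _ ->]; rewrite inE /= /tD.
exact: restr_perm_on.
Qed.


Hypotheses (csH : charsimple H) (nabH : ~~ abelian H)
  (trH : [transitive H, on [set: Om] | 'P]).
Variable (h0 : {perm Om}).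
Hypotheses (h0H : h0 \in H) (mov : top h0 i0 != i0).

Lemma Dl_card : 1 < #|Dl|.
Proof.
apply/card_gt1P; exists i0, (top h0 i0); split; rewrite ?Dl_i0 //.
  exact: Dl_st Dl_i0.
by rewrite eq_sym.
Qed.

Variable X : {group {perm Om}}.
Hypothesis dX : L \x X = H.

Lemma X_sub : X \subset H.
Proof. by have [_ <- _ _] := dprodP dX; apply: mulG_subr. Qed.

Lemma kk_ex j : j \in Dl -> exists2 k, k \in X & top k i0 = j.
Proof.
case/imsetP => h hH ->; have [_ eLX _ _] := dprodP dX.
rewrite -eLX in hH; case/mulsgP: hH => l k lL kX ->.
exists k => //; rewrite (topHM' (subsetP L_sub l lL) (subsetP X_sub k kX)).
by rewrite permM (L_fix lL Dl_i0).
Qed.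

Definition kk j : {perm Om} := odflt 1 [pick k in X | top k i0 == j].

Lemma kkP j : j \in Dl -> kk j \in X /\ top (kk j) i0 = j.
Proof.
move=> jD; rewrite /kk; case: pickP => [k /andP[kX /eqP e]|nok] //=.
have [k kX ek] := kk_ex jD; have := nok k; by rewrite kX ek eqxx.
Qed.

Variable t0 : T.
Definition cst : Om := [ffun _ => t0].
Definition x0 : Om := [ffun j => if j \in Dl then kk j cst j else t0].
Lemma x0E j : x0 j = if j \in Dl then kk j cst j else t0.
Proof. by rewrite ffunE. Qed.

Definition dact (z : Om) (g : {perm Om}) : Om :=
  if g \in H then [ffun j => if j \in Dl then g z j else z j] else z.

Lemma dact_is_action : is_action H dact.
Proof.
split.
  move=> g z z' /= e; case: (boolP (g \in H)) => gH; last by rewrite /dact (negPf gH) in e.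
  rewrite /dact gH in e; apply/ffunP => i; case: (boolP (i \in Dl)) => iD.
    have := congr1 (fun f : Om => f (top g i)) e; rewrite !ffunE Dl_st //.
    exact: (coord_inj (subsetP sHW g gH)).
  by have := congr1 (fun f : Om => f i) e; rewrite !ffunE (negPf iD).
move=> z g h gH hH; rewrite /dact groupM // gH hH.
apply/ffunP=> j; rewrite !ffunE; case: ifP => jD //; rewrite permM.
set i := (top h)^-1 j.
have ej : j = top h i by rewrite permKV.
have iD : i \in Dl by rewrite /i -topHV //; apply: Dl_st => //; apply: groupVr.
rewrite ej; apply: coord_loc; first exact: (subsetP sHW).
by rewrite ffunE iD.
Qed.

Definition dA := Action dact_is_action.

Lemma orbit_x0 : #|orbit dA H x0| = (#|T| ^ #|Dl|)%N.
Proof.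
rewrite -(card_pffun_on t0 Dl T); apply: eq_card => z; apply/idP/idP.
  case/imsetP => g gH ->; apply/pffun_onP; split => //.
  apply/subsetP => j; rewrite !inE /= /dact gH.
  rewrite ffunE.
  by case jD: (j \in Dl) => //; rewrite x0E jD eqxx.
case/pffun_onP => supp _.
have [g gH ez] := atransP2 trH (in_setT x0) (in_setT z).
apply/imsetP; exists g => //; apply/ffunP => j; rewrite /= /dact gH !ffunE.
case jD: (j \in Dl); first by rewrite ez.
rewrite ?x0E ?jD; apply/eqP; apply: contraFT jD => nz.
by apply: (subsetP supp); rewrite inE.
Qed.

Definition cact (t : T) (g : {perm Om}) : T :=
  if g \in L then g [ffun _ : 'I_r => t] i0 else t.

Lemma cact_is_action : is_action L cact.
Proof.
have gW g : g \in L -> g \in W.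
  by move=> gL; apply: (subsetP sHW); apply: (subsetP L_sub).
split.
  move=> g t t' /= e; case: (boolP (g \in L)) => gL; last by rewrite /cact (negPf gL) in e.
  rewrite /cact gL -{1 2}(L_fix gL Dl_i0) in e.
  by have := coord_inj (gW g gL) e; rewrite !ffunE.
move=> t g h gL hL; rewrite /cact groupM // gL hL permM.
rewrite -{1 3}(L_fix hL Dl_i0); apply: coord_loc; first exact: gW.
by rewrite ffunE.
Qed.

Definition cA := Action cact_is_action.

Lemma incl : 'C_L[t0 | cA] \subset 'C_H[x0 | dA].
Proof.
apply/subsetP => l /setIP[lL]; rewrite !inE sub1set inE /= => /andP[_ /eqP e].
have lH := subsetP L_sub l lL; have lW := subsetP sHW l lH.
rewrite /cact lL in e.
rewrite lH sub1set inE; apply/eqP.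
rewrite /dact lH; apply/ffunP => j; rewrite ffunE; case: ifP => jD //.
have [kX ek] := kkP jD; set k := kk j in kX ek *.
have kH := subsetP X_sub k kX; have kW := subsetP sHW k kH.
have [_ _ cLX _] := dprodP dX.
have clk : commute k l by have /centP := subsetP cLX k kX; apply.
have E1 : l x0 (top l j) = l (k cst) (top l j).
  by apply: coord_loc => //; rewrite x0E jD.
rewrite (L_fix lL jD) in E1; rewrite E1 -permM clk permM x0E jD -/k.
rewrite -ek; apply: coord_loc => //.
by rewrite e ffunE.
Qed.

Lemma count_div : (#|T| ^ #|Dl|)%N %| (#|H : L| * #|orbit cA L t0|)%N.
Proof.
rewrite -orbit_x0 card_orbit_in // card_orbit_in //.
rewrite Lagrange_index ?subsetIl ?L_sub //.
exact: indexgS incl.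
Qed.

Lemma final_false : False.
Proof.
have sle : #|orbit cA L t0| <= #|T| by apply: max_card.
have s0 : 0 < #|orbit cA L t0| by apply/card_gt0P; exists t0; exact: orbit_refl.
have [s2 n2] := arith nT Dl_card s0 sle index_L count_div.
have Hp := cs_perfect csH nabH.
have dX' := der_dprod 1 dX; rewrite Hp in dX'.
have c1 := dprod_card dX; have c2 := dprod_card dX'.
have sL := der_sub 1 L; have sX := der_sub 1 X.
have eL : L^`(1) = L.
  apply/eqP; rewrite eqEcard sL /=.
  have := subset_leq_card sL; have := subset_leq_card sX; have := cardG_gt0 X.
  have c3 := etrans c1 (esym c2).
  move: #|L| #|X| #|L^`(1)| #|X^`(1)| c3 => a b a' b' c3.
  nia.
pose f := actperm cA.
have abT : abelian [set: {perm T}].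
  apply: cyclic_abelian; apply: prime_cyclic.
  have -> : #|[set: {perm T}]| = #|T|`!.
    rewrite cardsT -[#|T|]cardsT -(card_perm [set: T]); apply: eq_card => p.
    by rewrite !inE; apply/esym/subsetP => z; rewrite inE.
  by rewrite n2.
have ab : abelian (f @* L) := abelianS (subsetT _) abT.
have fL1 : f @* L = 1.
  have := morphim_der f 1 (subxx L).
  by rewrite eL (derG1P ab).
have : #|orbit cA L t0| <= 1.
  rewrite -(cards1 t0); apply: subset_leq_card; apply/subsetP => _ /imsetP[l lL ->].
  have : f l \in f @* L by apply: mem_morphim.
  rewrite fL1 => /set1gP fl1.
  by move: fl1; rewrite /f => fl1; rewrite -(actpermE cA) fl1 perm1 set11.
rewrite s2 n2 //.
Qed.

End Main.

End Aux.
Import Aux.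

Theorem theorem1p1 (Gamma : finType) (r : nat)
  (H : {group {perm prod_omega Gamma r}}) :
  1 < #|Gamma| -> 1 < r ->
  H \subset wreathW Gamma r ->
  [transitive H, on [set: prod_omega Gamma r] | 'P] ->
  ~~ abelian H ->
  charsimple H ->
  H \subset base_group Gamma r.
Proof.
move=> nT r1 sHW trH nabH csH.
apply/subsetP => h hH.
have hW := subsetP sHW h hH.
case: (eqVneq (top h) 1%g) => [t1|nt1].
  have [a Ha] := topP hW.
  rewrite inE; apply/existsP; exists a; apply/forallP => z.
  by rewrite Ha t1.
exfalso.
have : ~~ [forall i, top h i == i].
  apply: contra nt1 => /forallP e; apply/eqP/permP => i; rewrite perm1; exact/eqP.
rewrite negb_forall => /existsP[i0 mi].
have [X dX] := cs_complement csH (ker_normal (tDm nT sHW i0)).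
have /card_gt0P [t0 _] : 0 < #|Gamma| by apply: ltnW.
exact: (final_false csH nabH trH hH mi dX t0).
Qed.
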